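(* Let $q>1$, $0\le M_0<M$, let $u$ be a sufficiently smooth $L$-periodic solution of $u_t=-\alpha uu_x+\beta u_{xxx}$ on $[0,T]\times\mathbb{R}$, $r>\sup_{t,x}|u(t,x)|$. Assume $u^{(0)}_k=u(0,k\Delta x)$, that $u^{(0)},\dots,u^{(M_0+1)}$ are obtained successively as solutions of the scheme, that $\|u^{(m)}\|_\infty\le r$ for $m\le M_0$, that $\Delta t<\min\{\varepsilon_1(q,r,\Delta x),\varepsilon_2(q,r,\Delta x)\}$, and that $\|u^{(M_0+1)}\|_\infty\le qr$. Let $c_0>0$ be a constant independent of $\Delta t,\Delta x$ with $\|\tau^{(m)}\|,\|\delta^+_x\tau^{(m)}\|\le c_0((\Delta t)^2+(\Delta x)^2)$ for $m=0,\dots,M_0$. If $\Delta t\le\Delta x$, then for $m=0,\dots,M_0$, $$\delta^+_t\|\delta^+_x e^{(m)}\|^2\le -\delta^+_t A^{(m)} + C_2\,\mu^+_t\|e^{(m)}\|_{H^1}^2+\Big(\frac{|\alpha|}{6|\beta|}+1\Big)c_0^2\big((\Delta t)^2+(\Delta x)^2\big)^2,$$ where $A^{(m)}=\frac{\alpha}{3\beta}\sum_{k=1}^K (e^{(m)}_k)^3\Delta x$ and $C_2=C_2(q,r)>0$ is a constant independent of $\Delta t$ and $\Delta x$.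
   Context: $L>0$, $K\in\mathbb{N}$, $\Delta x=L/K$; $T>0$, $M\in\mathbb{N}$, $\Delta t=T/M$; $\alpha\in\mathbb{R}$, $\beta\ne0$. Grid functions are $K$-periodic real sequences. $\delta^+_x v_k=(v_{k+1}-v_k)/\Delta x$, $\delta^{\langle 1\rangle}_x v_k = (v_{k+1}-v_{k-1})/(2\Delta x)$, $\delta^{\langle 2\rangle}_x v_k = (v_{k+1}-2v_k+v_{k-1})/(\Delta x)^2$, $\|v\|=(\sum_{k=1}^K v_k^2\Delta x)^{1/2}$, $\|v\|_\infty=\max_k|v_k|$, $\|v\|_{H^1}=(\|v\|^2+\|\delta^+_xv\|^2)^{1/2}$; $\delta^+_t v^{(n)}=(v^{(n+1)}-v^{(n)})/\Delta t$, $\mu^+_t v^{(n)}=(v^{(n+1)}+v^{(n)})/2$, applied also to scalar sequences. The scheme: $u^{(n+1)}$ solves it at step $n$ if $\delta^+_t u^{(n)}_k = -\frac{\alpha}{6}\delta^{\langle 1\rangle}_x\{(u^{(n+1)}_k)^2 + u^{(n+1)}_k u^{(n)}_k + (u^{(n)}_k)^2\} + \beta\delta^{\langle 1\rangle}_x\delta^{\langle 2\rangle}_x \mu^+_t u^{(n)}_k$ for all $k$. $\varepsilon_1(q,r,\Delta x) = (q-1)(\Delta x)^3[\frac{|\alpha|}{6}(\Delta x)^2(q^2+q+1)r + \frac{3}{2}|\beta|(q+1)]^{-1}$, $\varepsilon_2(q,r,\Delta x) = (\Delta x)^3[\frac{|\alpha|}{6}(\Delta x)^2(2q+1)r + \frac{3}{2}|\beta|]^{-1}$.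 $\tilde u^{(m)}_k=u(m\Delta t,k\Delta x)$, $e^{(m)}=u^{(m)}-\tilde u^{(m)}$, and the truncation error $\tau^{(m)}$ is defined by $\delta^+_t \tilde u^{(m)}_k = -\frac{\alpha}{6}\delta^{\langle 1\rangle}_x\{(\tilde u^{(m+1)}_k)^2 + \tilde u^{(m+1)}_k \tilde u^{(m)}_k + (\tilde u^{(m)}_k)^2\} + \beta\delta^{\langle 1\rangle}_x\delta^{\langle 2\rangle}_x \mu^+_t \tilde u^{(m)}_k+\tau^{(m)}_k$. *)

(* Defs.v *)
From Stdlib Require Import Reals Lra Lia ZArith List.
From Coquelicot Require Import Coquelicot.
Open Scope R_scope.

Definition pdt (f : R -> R -> R) : R -> R -> R :=
  fun t x => Derive (fun s => f s x) t.
Definition pdx (f : R -> R -> R) : R -> R -> R :=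
  fun t x => Derive (fun y => f t y) x.

(* iterated partial derivatives: true = d/dt, false = d/dx, applied
   from the head of the list outward *)
Fixpoint pderiv (w : list bool) (f : R -> R -> R) : R -> R -> R :=
  match w with
  | nil => f
  | b :: w' => (if b then pdt else pdx) (pderiv w' f)
  end.

Definition smooth2 (f : R -> R -> R) : Prop :=
  forall w : list bool,
    (forall t x, ex_derive (fun s => pderiv w f s x) t) /\
    (forall t x, ex_derive (fun y => pderiv w f t y) x) /\
    (forall t x, continuous (fun p : R * R => pderiv w f (fst p) (snd p)) (t, x)).

Definition gridfun := Z -> R.

Definition periodic_grid (K : nat) (v : gridfun) : Prop :=
  forall k : Z, v (k + Z.of_nat K)%Z = v k.

Definition dxp (dx : R) (v : gridfun) : gridfun :=
  fun k => (v (k + 1)%Z - v k) / dx.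
Definition dx1 (dx : R) (v : gridfun) : gridfun :=
  fun k => (v (k + 1)%Z - v (k - 1)%Z) / (2 * dx).
Definition dx2 (dx : R) (v : gridfun) : gridfun :=
  fun k => (v (k + 1)%Z - 2 * v k + v (k - 1)%Z) / (dx * dx).

Definition gsum (K : nat) (f : Z -> R) : R :=
  fold_right Rplus 0 (map (fun i => f (Z.of_nat i)) (seq 1 K)).

Definition norm2 (K : nat) (dx : R) (v : gridfun) : R :=
  gsum K (fun k => (v k) ^ 2 * dx).
Definition gnorm (K : nat) (dx : R) (v : gridfun) : R := sqrt (norm2 K dx v).
Definition norm_inf (K : nat) (v : gridfun) : R :=
  fold_right Rmax 0 (map (fun i => Rabs (v (Z.of_nat i))) (seq 1 K)).
Definition normH1_2 (K : nat) (dx : R) (v : gridfun) : R :=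
  norm2 K dx v + norm2 K dx (dxp dx v).

Definition scheme_step (alpha beta dx dt : R) (u0 u1 : gridfun) : Prop :=
  forall k : Z,
    (u1 k - u0 k) / dt =
      - (alpha / 6) * dx1 dx (fun j => (u1 j) ^ 2 + u1 j * u0 j + (u0 j) ^ 2) k
      + beta * dx1 dx (dx2 dx (fun j => (u1 j + u0 j) / 2)) k.

Definition trunc_err (alpha beta dx dt : R) (ut : nat -> gridfun) (m : nat) : gridfun :=
  fun k =>
    (ut (S m) k - ut m k) / dt
    - ( - (alpha / 6) * dx1 dx (fun j => (ut (S m) j) ^ 2 + ut (S m) j * ut m j + (ut m j) ^ 2) k
        + beta * dx1 dx (dx2 dx (fun j => (ut (S m) j + ut m j) / 2)) k ).

Definition scheme_eps1 (alpha beta q r dx : R) : R :=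
  (q - 1) * dx ^ 3 /
    (Rabs alpha / 6 * dx ^ 2 * (q ^ 2 + q + 1) * r + 3 / 2 * Rabs beta * (q + 1)).
Definition scheme_eps2 (alpha beta q r dx : R) : R :=
  dx ^ 3 / (Rabs alpha / 6 * dx ^ 2 * (2 * q + 1) * r + 3 / 2 * Rabs beta).

(* Main.v *)
Require Import Defs.
From Stdlib Require Import Reals ZArith List.
From Coquelicot Require Import Coquelicot.
From Stdlib Require Import Lra Lia Psatz Classical ClassicalEpsilon.
Open Scope R_scope.

Lemma fold_plus_c (l : list R) c : fold_right Rplus c l = fold_right Rplus 0 l + c.
Proof. induction l; simpl; [lra|]. rewrite IHl; lra. Qed.

Lemma gsum_0 f : gsum 0 f = 0.
Proof. reflexivity. Qed.

Lemma gsum_S n f : gsum (S n) f = gsum n f + f (Z.of_nat n + 1)%Z.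
Proof.
  unfold gsum. rewrite seq_S, map_app, fold_right_app. cbn [map fold_right].
  rewrite fold_plus_c. replace (Z.of_nat (1 + n)) with (Z.of_nat n + 1)%Z by lia. lra.
Qed.

Lemma gsum_ext n f g : (forall k, f k = g k) -> gsum n f = gsum n g.
Proof. intros H; induction n; [reflexivity|]. rewrite !gsum_S, IHn, H; reflexivity. Qed.

Lemma gsum_add n f g : gsum n (fun k => f k + g k) = gsum n f + gsum n g.
Proof. induction n; [simpl; unfold gsum; simpl; lra|]. rewrite !gsum_S, IHn; lra. Qed.

Lemma gsum_sub n f g : gsum n (fun k => f k - g k) = gsum n f - gsum n g.
Proof. induction n; [simpl; unfold gsum; simpl; lra|]. rewrite !gsum_S, IHn; lra. Qed.

Lemma gsum_scal n c f : gsum n (fun k => c * f k) = c * gsum n f.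
Proof. induction n; [simpl; unfold gsum; simpl; lra|]. rewrite !gsum_S, IHn; lra. Qed.

Lemma gsum_le n f g : (forall k, f k <= g k) -> gsum n f <= gsum n g.
Proof. intros H; induction n; [unfold gsum; simpl; lra|]. rewrite !gsum_S. specialize (H (Z.of_nat n + 1)%Z). lra. Qed.

Lemma gsum_nonneg n f : (forall k, 0 <= f k) -> 0 <= gsum n f.
Proof. intros H; induction n; [unfold gsum; simpl; lra|]. rewrite !gsum_S. specialize (H (Z.of_nat n + 1)%Z). lra. Qed.

Lemma gsum_abs n f : Rabs (gsum n f) <= gsum n (fun k => Rabs (f k)).
Proof. induction n; [unfold gsum; simpl; rewrite Rabs_R0; lra|]. rewrite !gsum_S.
  eapply Rle_trans; [apply Rabs_triang|]. lra. Qed.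

Lemma gsum_shift_gen n f : gsum n (fun k => f (k+1)%Z) = gsum n f + f (Z.of_nat n + 1)%Z - f 1%Z.
Proof. induction n; [unfold gsum; simpl; lra|]. rewrite !gsum_S, IHn.
  replace (Z.of_nat (S n) + 1)%Z with (Z.of_nat n + 1 + 1)%Z by lia.
  replace (Z.of_nat (S n)) with (Z.of_nat n + 1)%Z by lia. lra. Qed.

Lemma gsum_shift K f : (forall k, f (k + Z.of_nat K)%Z = f k) ->
  gsum K (fun k => f (k+1)%Z) = gsum K f.
Proof. intros H. rewrite gsum_shift_gen. rewrite <- (H 1%Z).
  replace (1 + Z.of_nat K)%Z with (Z.of_nat K + 1)%Z by lia. lra. Qed.

Lemma gsum_tele K (phi F G : Z -> R) : (forall k, phi (k + Z.of_nat K)%Z = phi k) ->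
  (forall k, F k = G k + (phi (k+1)%Z - phi k)) -> gsum K F = gsum K G.
Proof. intros Hp H. rewrite (gsum_ext _ _ _ H), gsum_add, gsum_sub, gsum_shift; auto. lra. Qed.

Lemma perK K (v : Z -> R) : periodic_grid K v -> forall a b, a = (b + Z.of_nat K)%Z -> v a = v b.
Proof. intros H a b ->. apply H. Qed.

Ltac psolve := intros; repeat (first [ reflexivity | (eapply perK; [eassumption | lia]) | f_equal ]).

Lemma gsum_shiftm K f : (forall k, f (k + Z.of_nat K)%Z = f k) ->
  gsum K (fun k => f (k-1)%Z) = gsum K f.
Proof. intros H. rewrite <- (gsum_shift K (fun k => f (k-1)%Z)).
  - apply gsum_ext. intros k. f_equal. lia.
  - intros k. rewrite <- (H (k-1)%Z). f_equal. lia. Qed.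

Lemma abs_add_le x y A B : Rabs x <= A -> Rabs y <= B -> Rabs (x+y) <= A + B.
Proof. intros; eapply Rle_trans; [apply Rabs_triang|lra]. Qed.
Lemma abs_sub_le x y A B : Rabs x <= A -> Rabs y <= B -> Rabs (x-y) <= A + B.
Proof. intros; eapply Rle_trans; [apply Rabs_triang|]. rewrite Rabs_Ropp; lra. Qed.
Lemma abs_mul_le x y A B : Rabs x <= A -> Rabs y <= B -> Rabs (x*y) <= A * B.
Proof. intros; rewrite Rabs_mult. apply Rmult_le_compat; auto; apply Rabs_pos. Qed.
Lemma abs_opp_le x A : Rabs x <= A -> Rabs (-x) <= A.
Proof. rewrite Rabs_Ropp; auto. Qed.
Lemma abs_pow2_le x A : Rabs x <= A -> Rabs (x^2) <= A * A.
Proof. intros; replace (x^2) with (x*x) by ring; apply abs_mul_le; auto. Qed.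
Lemma abs_pow3_le x A : Rabs x <= A -> Rabs (x^3) <= A * (A * A).
Proof. intros; replace (x^3) with (x*(x*x)) by ring; repeat apply abs_mul_le; auto. Qed.

Lemma abs_div_le x y A : Rabs x <= A -> 0 < y -> Rabs (x/y) <= A/y.
Proof. intros. unfold Rdiv. rewrite Rabs_mult, (Rabs_pos_eq (/y)) by (apply Rlt_le, Rinv_0_lt_compat; auto).
  apply Rmult_le_compat_r; auto. apply Rlt_le, Rinv_0_lt_compat; auto. Qed.

Ltac absx := match goal with
 | |- Rabs (_ + _) <= _ => eapply abs_add_le; [absx|absx]
 | |- Rabs (_ - _) <= _ => eapply abs_sub_le; [absx|absx]
 | |- Rabs (- _) <= _ => eapply abs_opp_le; absx
 | |- Rabs (_ / _) <= _ => eapply abs_div_le; [absx|lra]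
 | |- Rabs (_ * _) <= _ => eapply abs_mul_le; [absx|absx]
 | |- Rabs (_ ^ 2) <= _ => eapply abs_pow2_le; absx
 | |- Rabs ?x <= _ => first [ rewrite (Rabs_pos_eq x) by lra; apply Rle_refl | apply Rle_refl ]
 end.
Ltac pos := match goal with
 | |- 0 <= _ + _ => apply Rplus_le_le_0_compat; pos
 | |- 0 <= _ * _ => apply Rmult_le_pos; pos
 | |- 0 <= / _ => apply Rlt_le, Rinv_0_lt_compat; lra
 | |- 0 <= _ / _ => apply Rmult_le_pos; pos
 | |- 0 <= Rabs _ => apply Rabs_pos
 | |- _ => lra
 end.
Ltac mono := match goal with
 | |- _ + _ <= _ => eapply Rplus_le_compat; mono
 | |- _ * _ <= _ => eapply Rmult_le_compat; [pos|pos|mono|mono]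
 | |- _ / _ <= _ => eapply Rmult_le_compat; [pos|pos|mono|mono]
 | |- Rabs _ <= _ => eassumption
 | |- _ => apply Rle_refl
 end.
Ltac absmono := eapply Rle_trans; [absx|]; eapply Rle_trans; [mono|].
Definition Ef (e0 e1 : Z -> R) k := e1 k ^2 + e1 k * e0 k + e0 k ^2.
Definition Lf (e0 e1 a0 a1 : Z -> R) k := 2*a1 k*e1 k + 2*a0 k*e0 k + a1 k*e0 k + a0 k*e1 k.
Definition Gf al be dx (e0 e1 a0 a1 : Z -> R) : Z -> R := fun k =>
  -be * dx2 dx (fun j => (e1 j + e0 j)/2) k + al/6 * (Ef e0 e1 k + Lf e0 e1 a0 a1 k).

Lemma err_eq al be dx dt (U0 U1 a0 a1 tau : Z -> R) :
  0 < dx -> 0 < dt ->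
  scheme_step al be dx dt U0 U1 ->
  (forall k, tau k = (a1 k - a0 k)/dt - (-(al/6) * dx1 dx (fun j => a1 j ^2 + a1 j * a0 j + a0 j ^2) k + be * dx1 dx (dx2 dx (fun j => (a1 j + a0 j)/2)) k)) ->
  let e0 := fun k => U0 k - a0 k in let e1 := fun k => U1 k - a1 k in
  forall k, (e1 k - e0 k)/dt = - ((Gf al be dx e0 e1 a0 a1 (k+1)%Z - Gf al be dx e0 e1 a0 a1 (k-1)%Z)/(2*dx)) - tau k.
Proof.
  intros Hdx Hdt Hs Ht e0 e1 k. rewrite Ht. specialize (Hs k).
  assert (E: (e1 k - e0 k)/dt = (U1 k - U0 k)/dt - (a1 k - a0 k)/dt) by (unfold e1, e0; field; lra).
  rewrite E, Hs. unfold Gf, Ef, Lf, dx1, dx2, e0, e1. field. lra.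
Qed.

Lemma gsum_zero n : gsum n (fun _ => 0) = 0.
Proof. induction n; [reflexivity|]. rewrite gsum_S, IHn; lra. Qed.

Lemma gsum_opp n f : gsum n (fun k => - f k) = - gsum n f.
Proof. induction n; [unfold gsum; simpl; lra|]. rewrite !gsum_S, IHn; lra. Qed.

Lemma lin_comb gL gR a b c d k1 k2 : a = b -> c = d -> gL - gR = k1*(a-b) + k2*(c-d) -> gL = gR.
Proof. intros -> -> H. lra. Qed.

Ltac zn := repeat (rewrite ?Z.add_simpl_r, ?Z.sub_add in *).

Lemma energy_id al be dx dt K (e0 e1 a0 a1 tau : Z -> R) :
  be <> 0 -> 0 < dx -> 0 < dt ->
  periodic_grid K e0 -> periodic_grid K e1 -> periodic_grid K a0 -> periodic_grid K a1 ->
  periodic_grid K tau ->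
  (forall k, (e1 k - e0 k)/dt = - ((Gf al be dx e0 e1 a0 a1 (k+1)%Z - Gf al be dx e0 e1 a0 a1 (k-1)%Z)/(2*dx)) - tau k) ->
  (norm2 K dx (dxp dx e1) - norm2 K dx (dxp dx e0))/dt
   + (al/(3*be) * gsum K (fun k => e1 k^3*dx) - al/(3*be)*gsum K (fun k => e0 k^3*dx))/dt
 = al/(3*be) * gsum K (fun k => (Gf al be dx e0 e1 a0 a1 (k+1)%Z - Gf al be dx e0 e1 a0 a1 (k-1)%Z)/(2*dx) * Lf e0 e1 a0 a1 k * dx)
   - 2 * gsum K (fun k => dxp dx tau k * dxp dx (fun j => (e1 j + e0 j)/2) k * dx)
   - al/(3*be) * gsum K (fun k => tau k * Ef e0 e1 k * dx).
Proof.
  intros Hbe Hdx Hdt P0 P1 Pa0 Pa1 Pt EE.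
  set (G := Gf al be dx e0 e1 a0 a1) in *.
  assert (PG : periodic_grid K G).
  { intro k. unfold G, Gf, Ef, Lf, dx2. psolve. }
  set (X := gsum K (fun k => (G (k+1)%Z - G (k-1)%Z)/(2*dx) * Lf e0 e1 a0 a1 k * dx)).
  assert (S1 : gsum K (fun k => (e1 k - e0 k)/dt * G k * dx) = - gsum K (fun k => tau k * G k * dx)).
  { transitivity (gsum K (fun k => -((G (k+1)%Z - G (k-1)%Z)/(2*dx)) * G k * dx - tau k * G k * dx)).
    { apply gsum_ext; intro k; cbv beta; rewrite EE; ring. }
    rewrite gsum_sub.
    replace (gsum K (fun k => -((G (k+1)%Z - G (k-1)%Z)/(2*dx)) * G k * dx)) with 0; [lra|].
    rewrite <- (gsum_zero K). symmetry.
    apply (gsum_tele K (fun k => -(G (k-1)%Z * G k)/2)).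
    - psolve.
    - intro k. zn. field. lra. }
  assert (S2 : gsum K (fun k => (e1 k - e0 k)/dt * G k * dx) =
     be/(2*dt) * (norm2 K dx (dxp dx e1) - norm2 K dx (dxp dx e0))
     + al/(6*dt) * (gsum K (fun k => e1 k^3*dx) - gsum K (fun k => e0 k^3*dx))
     + al/6 * gsum K (fun k => (e1 k - e0 k)/dt * Lf e0 e1 a0 a1 k * dx)).
  { transitivity (gsum K (fun k => (e1 k - e0 k)/dt * (-be * dx2 dx (fun j => (e1 j + e0 j)/2) k) * dx
       + al/(6*dt) * (e1 k^3*dx - e0 k^3*dx) + al/6 * ((e1 k - e0 k)/dt * Lf e0 e1 a0 a1 k * dx))).
    { apply gsum_ext; intro k. unfold G, Gf, Ef. field. lra. }
    rewrite !gsum_add, !gsum_scal, gsum_sub. f_equal. f_equal.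
    unfold norm2. rewrite <- gsum_sub, <- gsum_scal.
    apply (gsum_tele K (fun k => -be * (e1 k - e0 k) * ((e1 k + e0 k)/2 - (e1 (k-1)%Z + e0 (k-1)%Z)/2)/(dt*dx))).
    - psolve.
    - intro k. unfold dx2, dxp. zn. field. lra. }
  assert (S3 : gsum K (fun k => (e1 k - e0 k)/dt * Lf e0 e1 a0 a1 k * dx) = - X - gsum K (fun k => tau k * Lf e0 e1 a0 a1 k * dx)).
  { unfold X. rewrite <- gsum_opp, <- gsum_sub. apply gsum_ext; intro k. cbv beta. rewrite EE; ring. }
  assert (S4 : gsum K (fun k => tau k * G k * dx) - al/6 * gsum K (fun k => tau k * Lf e0 e1 a0 a1 k * dx)
     = be * gsum K (fun k => dxp dx tau k * dxp dx (fun j => (e1 j + e0 j)/2) k * dx)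
       + al/6 * gsum K (fun k => tau k * Ef e0 e1 k * dx)).
  { rewrite <- !gsum_scal, <- gsum_sub, <- gsum_add.
    apply (gsum_tele K (fun k => -be * tau k * ((e1 k + e0 k)/2 - (e1 (k-1)%Z + e0 (k-1)%Z)/2)/dx)).
    - psolve.
    - intro k. unfold G, Gf, dx2, dxp. zn. field. lra. }
  rewrite S2, S3 in S1.
  apply (lin_comb _ _ _ _ _ _ (2/be) (-(2/be)) S1 S4).
  unfold X. field. lra.
Qed.

Definition wf (e0 e1 : Z->R) j := (e1 j + e0 j)/2.
Definition pf dx (e0 e1 : Z -> R) j := (wf e0 e1 (j+1)%Z - wf e0 e1 j)/dx.
Definition vf (a0 a1 : Z->R) j := (a1 j + a0 j)/2.
Definition gf dx (e0 e1 a0 a1 : Z -> R) j := wf e0 e1 (j-1)%Z * (vf a0 a1 (j+1)%Z - vf a0 a1 (j-1)%Z)/(2*dx).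
Definition Tap dx (e0 e1 a0 a1 : Z -> R) k := pf dx e0 e1 k ^2 * (vf a0 a1 (k+1)%Z - vf a0 a1 (k+1+1)%Z)/(2*dx) * dx.
Definition Tbp dx (e0 e1 a0 a1 : Z -> R) k := - pf dx e0 e1 k * (gf dx e0 e1 a0 a1 (k+1)%Z - gf dx e0 e1 a0 a1 k).
Definition Rc1 be dx (e0 e1 a0 a1 : Z -> R) k := be/2 * dx2 dx (wf e0 e1) k *
  ((a1 (k+1)%Z - a0 (k+1)%Z)*(e1 (k+1)%Z - e0 (k+1)%Z) - (a1 (k-1)%Z - a0 (k-1)%Z)*(e1 (k-1)%Z - e0 (k-1)%Z))/(2*dx) * dx.
Definition Rc2 al dx (e0 e1 a0 a1 : Z -> R) k := -(al/6) * (Ef e0 e1 k + Lf e0 e1 a0 a1 k) *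
  (Lf e0 e1 a0 a1 (k+1)%Z - Lf e0 e1 a0 a1 (k-1)%Z)/(2*dx) * dx.

Lemma X_decomp al be dx K (e0 e1 a0 a1 : Z -> R) :
  0 < dx ->
  periodic_grid K e0 -> periodic_grid K e1 -> periodic_grid K a0 -> periodic_grid K a1 ->
  gsum K (fun k => (Gf al be dx e0 e1 a0 a1 (k+1)%Z - Gf al be dx e0 e1 a0 a1 (k-1)%Z)/(2*dx) * Lf e0 e1 a0 a1 k * dx)
  = gsum K (fun k => 6*be*(Tap dx e0 e1 a0 a1 k + Tbp dx e0 e1 a0 a1 k) + Rc1 be dx e0 e1 a0 a1 k + Rc2 al dx e0 e1 a0 a1 k).
Proof.
  intros Hdx P0 P1 Pa0 Pa1.
  set (G := Gf al be dx e0 e1 a0 a1).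
  set (L := Lf e0 e1 a0 a1).
  assert (PG : periodic_grid K G).
  { intro k. unfold G, Gf, Ef, Lf, dx2. psolve. }
  assert (PL : periodic_grid K L).
  { intro k. unfold L, Lf. psolve. }
  set (Ta := fun k => dx2 dx (wf e0 e1) k * vf a0 a1 (k+1)%Z * (wf e0 e1 (k+1)%Z - wf e0 e1 (k-1)%Z)/(2*dx) * dx).
  set (Tb := fun k => dx2 dx (wf e0 e1) k * gf dx e0 e1 a0 a1 k * dx).
  transitivity (gsum K (fun k => -(G k * (L (k+1)%Z - L (k-1)%Z)/(2*dx)) * dx)).
  { apply (gsum_tele K (fun k => (G (k-1)%Z * L k + G k * L (k-1)%Z)/2)).
    - psolve.
    - intro k. zn. field. lra. }
  transitivity (gsum K (fun k => 6*be*(Ta k + Tb k) + Rc1 be dx e0 e1 a0 a1 k + Rc2 al dx e0 e1 a0 a1 k)).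
  { apply gsum_ext; intro k. unfold Ta, Tb, G, L, Gf, Rc1, Rc2, gf, wf, vf, Lf, Ef, dx2. field. lra. }
  rewrite !gsum_add, !gsum_scal, !gsum_add. f_equal. f_equal. f_equal. f_equal.
  - apply (gsum_tele K (fun k => vf a0 a1 (k+1)%Z * pf dx e0 e1 (k-1)%Z ^2 / 2)).
    + intro k. unfold vf, pf, wf. psolve.
    + intro k. unfold Ta, Tap, pf, dx2, wf. zn. field. lra.
  - apply (gsum_tele K (fun k => pf dx e0 e1 (k-1)%Z * gf dx e0 e1 a0 a1 k)).
    + intro k. unfold gf, vf, pf, wf. psolve.
    + intro k. unfold Tb, Tbp, pf, dx2, wf. zn. field. lra.
Qed.

Ltac absfin := repeat match goal with |- context [Rabs ?x] => 
   lazymatch goal with H : 0 <= Rabs x |- _ => fail | _ => pose proof (Rabs_pos x) end end.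

Lemma bnd_Tap (y1 y0 c M B1 : R): Rabs y1 <= M -> Rabs y0 <= M -> Rabs c <= B1/2 ->
  Rabs (((y1+y0)/2)^2 * c) <= B1/2 * (M*M).
Proof. intros. absmono. try (apply Req_le; field). Qed.

Lemma bnd_Tbp (y1 y0 y1m y0m x1m x0m c1 c2 M B1 B2 : R):
  Rabs y1 <= M -> Rabs y0 <= M -> Rabs y1m <= M -> Rabs y0m <= M -> Rabs x1m <= M -> Rabs x0m <= M ->
  Rabs c1 <= B1 -> Rabs c2 <= B2 ->
  Rabs (-((y1+y0)/2) * ((y1m+y0m)/2 * c1 + (x1m+x0m)/2 * c2)) <= (B1+B2)*(M*M).
Proof. intros. absmono. try (apply Req_le; field). Qed.

Lemma bnd_Rc1 (bg y1 y0 y1m y0m h1 h2 x1p x0p x1m x0m M Bt BG : R) :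
  Rabs bg <= BG -> Rabs y1 <= M -> Rabs y0 <= M -> Rabs y1m <= M -> Rabs y0m <= M ->
  Rabs x1p <= M -> Rabs x0p <= M -> Rabs x1m <= M -> Rabs x0m <= M -> Rabs h1 <= Bt -> Rabs h2 <= Bt ->
  Rabs (bg * ((y1+y0)/2 - (y1m+y0m)/2) * (h1*(x1p-x0p) - h2*(x1m-x0m))/4) <= 2*BG*Bt*(M*M).
Proof. intros. absmono. try (apply Req_le; field). Qed.

Lemma bnd_N (x1 x0 a1 a0 M R0 B0 : R) : Rabs x1 <= M -> Rabs x0 <= M -> Rabs x1 <= R0 -> Rabs x0 <= R0 ->
  Rabs a1 <= B0 -> Rabs a0 <= B0 ->
  Rabs ((x1^2 + x1*x0 + x0^2) + (2*a1*x1 + 2*a0*x0 + a1*x0 + a0*x1)) <= (3*R0+6*B0)*M.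
Proof. intros. replace (x1^2) with (x1*x1) by ring. replace (x0^2) with (x0*x0) by ring.
  eapply Rle_trans. absx.
  pose proof (Rabs_pos x1); pose proof (Rabs_pos x0); pose proof (Rabs_pos a1); pose proof (Rabs_pos a0).
  pose proof (Rmult_le_compat _ _ _ _ H5 H5 H1 H).
  pose proof (Rmult_le_compat _ _ _ _ H5 H6 H1 H0).
  pose proof (Rmult_le_compat _ _ _ _ H6 H6 H2 H0).
  pose proof (Rmult_le_compat _ _ _ _ H7 H5 H3 H).
  pose proof (Rmult_le_compat _ _ _ _ H8 H6 H4 H0).
  pose proof (Rmult_le_compat _ _ _ _ H7 H6 H3 H0).
  pose proof (Rmult_le_compat _ _ _ _ H8 H5 H4 H).
  lra. Qed.

Lemma bnd_D (x1p x0p y1 y0 y1m y0m c1 c0 a1m a0m M B0 B1 : R) :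
  Rabs x1p <= M -> Rabs x0p <= M -> Rabs y1 <= M -> Rabs y0 <= M -> Rabs y1m <= M -> Rabs y0m <= M ->
  Rabs c1 <= B1 -> Rabs c0 <= B1 -> Rabs a1m <= B0 -> Rabs a0m <= B0 ->
  Rabs (2*(c1*x1p + a1m*((y1+y1m)/2)) + 2*(c0*x0p + a0m*((y0+y0m)/2))
        + (c1*x0p + a1m*((y0+y0m)/2)) + (c0*x1p + a0m*((y1+y1m)/2))) <= 6*(B0+B1)*M.
Proof. intros. absmono. try (apply Req_le; field). Qed.

Definition Qf dx (e0 e1 : Z -> R) k := e1 k^2 + e0 k^2 + dxp dx e1 k^2 + dxp dx e0 k^2.
Definition Q3 dx (e0 e1 : Z -> R) k := Qf dx e0 e1 (k-1)%Z + Qf dx e0 e1 k + Qf dx e0 e1 (k+1)%Z.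

Lemma Qf_nonneg dx e0 e1 k : 0 <= Qf dx e0 e1 k.
Proof. unfold Qf. pose proof (pow2_ge_0 (e1 k)). pose proof (pow2_ge_0 (e0 k)).
  pose proof (pow2_ge_0 (dxp dx e1 k)). pose proof (pow2_ge_0 (dxp dx e0 k)). lra. Qed.
Lemma Q3_nonneg dx e0 e1 k : 0 <= Q3 dx e0 e1 k.
Proof. unfold Q3. pose proof (Qf_nonneg dx e0 e1 (k-1)). pose proof (Qf_nonneg dx e0 e1 k).
  pose proof (Qf_nonneg dx e0 e1 (k+1)). lra. Qed.

Lemma abs_le_sqrt x P : x^2 <= P -> Rabs x <= sqrt P.
Proof. intros H. rewrite <- sqrt_Rsqr_abs. apply sqrt_le_1_alt. unfold Rsqr. simpl in H. lra. Qed.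

Lemma atoms dx e0 e1 k : let M := sqrt (Q3 dx e0 e1 k) in
  Rabs (e1 (k-1)%Z) <= M /\ Rabs (e1 k) <= M /\ Rabs (e1 (k+1)%Z) <= M /\
  Rabs (e0 (k-1)%Z) <= M /\ Rabs (e0 k) <= M /\ Rabs (e0 (k+1)%Z) <= M /\
  Rabs (dxp dx e1 (k-1)%Z) <= M /\ Rabs (dxp dx e1 k) <= M /\
  Rabs (dxp dx e0 (k-1)%Z) <= M /\ Rabs (dxp dx e0 k) <= M.
Proof.
  intros M. unfold M.
  pose proof (Qf_nonneg dx e0 e1 (k-1)). pose proof (Qf_nonneg dx e0 e1 k).
  pose proof (Qf_nonneg dx e0 e1 (k+1)).
  assert (forall j x, x^2 <= Qf dx e0 e1 j -> (j = k-1 \/ j = k \/ j = k+1)%Z -> Rabs x <= sqrt (Q3 dx e0 e1 k)).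
  { intros j x Hx Hj. apply abs_le_sqrt. unfold Q3. destruct Hj as [->|[->| ->]]; lra. }
  assert (forall j, e1 j^2 <= Qf dx e0 e1 j /\ e0 j^2 <= Qf dx e0 e1 j /\ dxp dx e1 j^2 <= Qf dx e0 e1 j /\ dxp dx e0 j^2 <= Qf dx e0 e1 j).
  { intros j. unfold Qf. pose proof (pow2_ge_0 (e1 j)). pose proof (pow2_ge_0 (e0 j)).
    pose proof (pow2_ge_0 (dxp dx e1 j)). pose proof (pow2_ge_0 (dxp dx e0 j)). lra. }
  repeat split; (eapply H2; [apply H3 | lia]).
Qed.

Lemma fin_bound (t dx c M Q X : R) : 0 < dx -> t = dx * X -> Rabs X <= c * (M*M) -> M = sqrt Q -> 0 <= Q ->
  Rabs t <= c * Q * dx.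
Proof. intros Hdx -> HX -> HQ. rewrite sqrt_sqrt in HX by auto. rewrite Rabs_mult, Rabs_pos_eq by lra. nra. Qed.

Lemma div_bound x B dx c : 0 < dx -> Rabs x <= B * dx -> 0 < c -> Rabs (x/(c*dx)) <= B/c.
Proof. intros. unfold Rdiv. rewrite Rabs_mult, Rabs_inv, (Rabs_pos_eq (c*dx)) by nra.
  apply (Rmult_le_reg_r (c*dx)); [nra|]. field_simplify; [|lra|lra]. lra. Qed.

Definition CX al be cd L R0 B0 B1 B2 Bt :=
  6*Rabs be*(B1/2 + (B1+B2)) + 2*(Rabs be*cd*L)*Bt + Rabs al/6*((3*R0+6*B0)*(6*(B0+B1))).

Lemma div_bound1 x B d : 0 < d -> Rabs x <= B * d -> Rabs (x/d) <= B.
Proof. intros. unfold Rdiv. rewrite Rabs_mult, Rabs_inv, (Rabs_pos_eq d) by lra.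
  apply (Rmult_le_reg_r d); [lra|]. field_simplify; lra. Qed.

Lemma Rabs_div' x y : Rabs (x / y) = Rabs x / Rabs y.
Proof. unfold Rdiv. rewrite Rabs_mult, Rabs_inv. reflexivity. Qed.

Lemma abs4 a b c d : Rabs (a+b+c+d) <= Rabs a + Rabs b + Rabs c + Rabs d.
Proof. eapply Rle_trans; [apply Rabs_triang|]. eapply Rle_trans; [apply Rplus_le_compat_r, Rabs_triang|].
  eapply Rle_trans; [apply Rplus_le_compat_r, Rplus_le_compat_r, Rabs_triang|]. lra. Qed.

Lemma pw_bound al be dx dt cd L R0 B0 B1 B2 Bt (e0 e1 a0 a1 : Z->R) k :
  0 < dx -> 0 < dt -> dx <= L -> dt <= cd*(dx*(dx*dx)) -> 0 <= cd ->
  (forall j, Rabs (e0 j) <= R0) -> (forall j, Rabs (e1 j) <= R0) ->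
  (forall j, Rabs (a0 j) <= B0) -> (forall j, Rabs (a1 j) <= B0) ->
  (forall j, Rabs (a0 (j+1)%Z - a0 j) <= B1*dx) -> (forall j, Rabs (a1 (j+1)%Z - a1 j) <= B1*dx) ->
  (forall j, Rabs (a0 (j+1)%Z - 2*a0 j + a0 (j-1)%Z) <= B2*(dx*dx)) ->
  (forall j, Rabs (a1 (j+1)%Z - 2*a1 j + a1 (j-1)%Z) <= B2*(dx*dx)) ->
  (forall j, Rabs (a1 j - a0 j) <= Bt*dt) ->
  Rabs (6*be*(Tap dx e0 e1 a0 a1 k + Tbp dx e0 e1 a0 a1 k) + Rc1 be dx e0 e1 a0 a1 k + Rc2 al dx e0 e1 a0 a1 k)
   <= CX al be cd L R0 B0 B1 B2 Bt * Q3 dx e0 e1 k * dx.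
Proof.
  intros Hdx Hdt HdL Hcd Hcd0 He0 He1 Ha0 Ha1 Hd0 Hd1 Hs0 Hs1 Ht.
  destruct (atoms dx e0 e1 k) as (A1 & A2 & A3 & A4 & A5 & A6 & A7 & A8 & A9 & A10).
  set (M := sqrt (Q3 dx e0 e1 k)) in *.
  pose proof (Q3_nonneg dx e0 e1 k) as HQ.
  assert (HTa : Rabs (Tap dx e0 e1 a0 a1 k) <= B1/2 * Q3 dx e0 e1 k * dx).
  { apply (fin_bound _ dx (B1/2) M _ (((dxp dx e1 k + dxp dx e0 k)/2)^2 * ((vf a0 a1 (k+1)%Z - vf a0 a1 (k+1+1)%Z)/(2*dx)))); auto.
    - unfold Tap, pf, wf, dxp. field. lra.
    - apply bnd_Tap; auto.
      replace ((vf a0 a1 (k+1)%Z - vf a0 a1 (k+1+1)%Z)/(2*dx)) with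
        ((-((a1 (k+1+1)%Z - a1 (k+1)%Z) + (a0 (k+1+1)%Z - a0 (k+1)%Z)))/(4*dx)) by (unfold vf; field; lra).
      replace (B1/2) with ((2*B1)/4) by field. apply div_bound; [lra| |lra].
      rewrite Rabs_Ropp. specialize (Hd0 (k+1)%Z). specialize (Hd1 (k+1)%Z).
      eapply Rle_trans; [apply Rabs_triang|]. lra. }
  assert (HTb : Rabs (Tbp dx e0 e1 a0 a1 k) <= (B1+B2) * Q3 dx e0 e1 k * dx).
  { apply (fin_bound _ dx (B1+B2) M _ (-((dxp dx e1 k + dxp dx e0 k)/2) *
       ((dxp dx e1 (k-1)%Z + dxp dx e0 (k-1)%Z)/2 * ((vf a0 a1 (k+1+1)%Z - vf a0 a1 k)/(2*dx))
        + (e1 (k-1)%Z + e0 (k-1)%Z)/2 * ((vf a0 a1 (k+1+1)%Z - vf a0 a1 (k+1)%Z - vf a0 a1 k + vf a0 a1 (k-1)%Z)/(2*(dx*dx)))))); auto.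
    - unfold Tbp, gf, pf, wf, dxp. zn. field. lra.
    - apply bnd_Tbp; auto.
      + replace ((vf a0 a1 (k+1+1)%Z - vf a0 a1 k)/(2*dx)) with
          (((a1 (k+1+1)%Z - a1 (k+1)%Z) + (a1 (k+1)%Z - a1 k) + (a0 (k+1+1)%Z - a0 (k+1)%Z) + (a0 (k+1)%Z - a0 k))/(4*dx)) by (unfold vf; field; lra).
        replace B1 with ((4*B1)/4) by field. apply div_bound; [lra| |lra].
        pose proof (Hd0 (k+1)%Z). pose proof (Hd1 (k+1)%Z). pose proof (Hd0 k). pose proof (Hd1 k).
        eapply Rle_trans; [apply abs4|]. lra.
      + replace ((vf a0 a1 (k+1+1)%Z - vf a0 a1 (k+1)%Z - vf a0 a1 k + vf a0 a1 (k-1)%Z)/(2*(dx*dx))) with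
          (((a1 (k+1+1)%Z - 2*a1 (k+1)%Z + a1 k) + (a1 (k+1)%Z - 2*a1 k + a1 (k-1)%Z)
           + (a0 (k+1+1)%Z - 2*a0 (k+1)%Z + a0 k) + (a0 (k+1)%Z - 2*a0 k + a0 (k-1)%Z))/(4*(dx*dx))) by (unfold vf; field; lra).
        replace B2 with ((4*B2)/4) by field. apply div_bound; [nra| |lra].
        pose proof (Hs0 (k+1)%Z). pose proof (Hs1 (k+1)%Z). pose proof (Hs0 k). pose proof (Hs1 k). zn.
        eapply Rle_trans; [apply abs4|]. lra. }
  assert (HR1 : Rabs (Rc1 be dx e0 e1 a0 a1 k) <= 2*(Rabs be*cd*L)*Bt * Q3 dx e0 e1 k * dx).
  { apply (fin_bound _ dx (2*(Rabs be*cd*L)*Bt) M _ ((be*(dt/(dx*dx))) *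
       ((dxp dx e1 k + dxp dx e0 k)/2 - (dxp dx e1 (k-1)%Z + dxp dx e0 (k-1)%Z)/2) *
       ((a1 (k+1)%Z - a0 (k+1)%Z)/dt * (e1 (k+1)%Z - e0 (k+1)%Z) - (a1 (k-1)%Z - a0 (k-1)%Z)/dt * (e1 (k-1)%Z - e0 (k-1)%Z))/4)); auto.
    - unfold Rc1, dx2, wf, dxp. zn. field. lra.
    - apply bnd_Rc1; auto; try (apply div_bound1; auto).
      rewrite Rabs_mult, Rmult_assoc. apply Rmult_le_compat_l; [apply Rabs_pos|].
      rewrite Rabs_pos_eq by (apply Rmult_le_pos; [lra| apply Rlt_le, Rinv_0_lt_compat; nra]).
      apply (Rmult_le_reg_r (dx*dx)); [nra|]. field_simplify; [|lra]. nra. }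
  assert (HR2 : Rabs (Rc2 al dx e0 e1 a0 a1 k) <= Rabs al/6*((3*R0+6*B0)*(6*(B0+B1))) * Q3 dx e0 e1 k * dx).
  { apply (fin_bound _ dx (Rabs al/6*((3*R0+6*B0)*(6*(B0+B1)))) M _ (-(al/6) *
      ((e1 k^2 + e1 k*e0 k + e0 k^2) + (2*a1 k*e1 k + 2*a0 k*e0 k + a1 k*e0 k + a0 k*e1 k)) *
      (2*((a1 (k+1)%Z - a1 (k-1)%Z)/(2*dx)*e1 (k+1)%Z + a1 (k-1)%Z*((dxp dx e1 k + dxp dx e1 (k-1)%Z)/2))
       + 2*((a0 (k+1)%Z - a0 (k-1)%Z)/(2*dx)*e0 (k+1)%Z + a0 (k-1)%Z*((dxp dx e0 k + dxp dx e0 (k-1)%Z)/2))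
       + ((a1 (k+1)%Z - a1 (k-1)%Z)/(2*dx)*e0 (k+1)%Z + a1 (k-1)%Z*((dxp dx e0 k + dxp dx e0 (k-1)%Z)/2))
       + ((a0 (k+1)%Z - a0 (k-1)%Z)/(2*dx)*e1 (k+1)%Z + a0 (k-1)%Z*((dxp dx e1 k + dxp dx e1 (k-1)%Z)/2))))); auto.
    - unfold Rc2, Ef, Lf, dxp. zn. field. lra.
    - assert (Hc : forall a : Z -> R, (forall j, Rabs (a (j+1)%Z - a j) <= B1*dx) -> Rabs ((a (k+1)%Z - a (k-1)%Z)/(2*dx)) <= B1).
      { intros a Ha. replace (a (k+1)%Z - a (k-1)%Z) with ((a (k+1)%Z - a k) + (a k - a (k-1)%Z)) by ring.
        replace B1 with ((2*B1)/2) by field. apply div_bound; [lra| |lra].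
        pose proof (Ha k). pose proof (Ha (k-1)%Z). zn. eapply Rle_trans; [apply Rabs_triang|]. lra. }
      pose proof (bnd_N (e1 k) (e0 k) (a1 k) (a0 k) M R0 B0 A2 A5 (He1 k) (He0 k) (Ha1 k) (Ha0 k)) as HN.
      pose proof (bnd_D (e1 (k+1)%Z) (e0 (k+1)%Z) (dxp dx e1 k) (dxp dx e0 k) (dxp dx e1 (k-1)%Z) (dxp dx e0 (k-1)%Z)
        _ _ (a1 (k-1)%Z) (a0 (k-1)%Z) M B0 B1 A3 A6 A8 A10 A7 A9 (Hc a1 Hd1) (Hc a0 Hd0) (Ha1 _) (Ha0 _)) as HD.
      rewrite !Rabs_mult, Rabs_Ropp, Rabs_div', (Rabs_pos_eq 6) by lra.
      replace (Rabs al / 6 * ((3 * R0 + 6 * B0) * (6 * (B0 + B1))) * (M * M)) with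
        (Rabs al / 6 * (((3 * R0 + 6 * B0) * M) * (6 * (B0 + B1) * M))) by ring.
      rewrite (Rmult_assoc (Rabs al / 6)).
      apply Rmult_le_compat_l; [apply Rmult_le_pos; [apply Rabs_pos|lra]|].
      apply Rmult_le_compat; auto using Rabs_pos. }
  unfold CX.
  eapply Rle_trans; [apply Rabs_triang|]. eapply Rle_trans; [apply Rplus_le_compat_r, Rabs_triang|].
  rewrite Rabs_mult, Rabs_mult, (Rabs_pos_eq 6) by lra.
  assert (Rabs (Tap dx e0 e1 a0 a1 k + Tbp dx e0 e1 a0 a1 k) <= (B1/2 + (B1+B2)) * Q3 dx e0 e1 k * dx).
  { eapply Rle_trans; [apply Rabs_triang|]. lra. }
  assert (6 * Rabs be * Rabs (Tap dx e0 e1 a0 a1 k + Tbp dx e0 e1 a0 a1 k) <= 6 * Rabs be * ((B1/2 + (B1+B2)) * Q3 dx e0 e1 k * dx)).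
  { apply Rmult_le_compat_l; [pose proof (Rabs_pos be); lra | auto]. }
  lra.
Qed.

Definition Ccore al be cd L R0 B0 B1 B2 Bt :=
  2*(1/2 + Rabs al/(6*Rabs be)*(9/2)*R0^2 + 6*(Rabs al/(6*Rabs be))*CX al be cd L R0 B0 B1 B2 Bt).

Lemma sq_abs x : Rabs x ^2 = x^2.
Proof. rewrite RPow_abs. apply Rabs_pos_eq, pow2_ge_0. Qed.

Lemma E_sq_bound x1 x0 R0 : Rabs x1 <= R0 -> Rabs x0 <= R0 ->
  (x1^2 + x1*x0 + x0^2)^2 <= 9/2*R0^2*(x1^2+x0^2).
Proof.
  intros H1 H0.
  assert (A: Rabs (x1^2 + x1*x0 + x0^2) <= 3/2*(x1^2+x0^2)).
  { pose proof (pow2_ge_0 (x1 + x0/2)); pose proof (pow2_ge_0 x0); pose proof (pow2_ge_0 (x1 - x0)).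
    rewrite Rabs_pos_eq by nra. nra. }
  assert (B: x1^2 + x0^2 <= 2*R0^2).
  { pose proof (Rabs_pos x1). pose proof (Rabs_pos x0).
    rewrite <- (sq_abs x1), <- (sq_abs x0). nra. }
  pose proof (Rabs_pos (x1^2 + x1*x0 + x0^2)).
  rewrite <- sq_abs. nra.
Qed.

Lemma core al be cd L R0 B0 B1 B2 Bt K dx dt (U0 U1 a0 a1 tau : Z -> R) :
  be <> 0 -> 0 < dx -> 0 < dt -> dx <= L -> dt <= cd*(dx*(dx*dx)) -> 0 <= cd ->
  periodic_grid K U0 -> periodic_grid K U1 -> periodic_grid K a0 -> periodic_grid K a1 ->
  scheme_step al be dx dt U0 U1 ->
  (forall k, tau k = (a1 k - a0 k)/dt - (-(al/6) * dx1 dx (fun j => a1 j ^2 + a1 j * a0 j + a0 j ^2) k + be * dx1 dx (dx2 dx (fun j => (a1 j + a0 j)/2)) k)) ->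
  (forall j, Rabs (U0 j - a0 j) <= R0) -> (forall j, Rabs (U1 j - a1 j) <= R0) ->
  (forall j, Rabs (a0 j) <= B0) -> (forall j, Rabs (a1 j) <= B0) ->
  (forall j, Rabs (a0 (j+1)%Z - a0 j) <= B1*dx) -> (forall j, Rabs (a1 (j+1)%Z - a1 j) <= B1*dx) ->
  (forall j, Rabs (a0 (j+1)%Z - 2*a0 j + a0 (j-1)%Z) <= B2*(dx*dx)) ->
  (forall j, Rabs (a1 (j+1)%Z - 2*a1 j + a1 (j-1)%Z) <= B2*(dx*dx)) ->
  (forall j, Rabs (a1 j - a0 j) <= Bt*dt) ->
  let e0 := fun k => U0 k - a0 k in let e1 := fun k => U1 k - a1 k in
  (norm2 K dx (dxp dx e1) - norm2 K dx (dxp dx e0))/dt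
  <= - ((al/(3*be) * gsum K (fun k => e1 k^3*dx) - al/(3*be)*gsum K (fun k => e0 k^3*dx))/dt)
     + Ccore al be cd L R0 B0 B1 B2 Bt * ((normH1_2 K dx e1 + normH1_2 K dx e0)/2)
     + Rabs al/(6*Rabs be) * norm2 K dx tau + norm2 K dx (dxp dx tau).
Proof.
  intros Hbe Hdx Hdt HdL Hcd Hcd0 PU0 PU1 Pa0 Pa1 Hs Htau He0 He1 Ha0 Ha1 Hd0 Hd1 Hss0 Hss1 Ht e0 e1.
  assert (P0 : periodic_grid K e0) by (intro k; unfold e0; psolve).
  assert (P1 : periodic_grid K e1) by (intro k; unfold e1; psolve).
  assert (Pt : periodic_grid K tau) by (intro k; rewrite !Htau; unfold dx1, dx2; psolve).
  pose proof (err_eq al be dx dt U0 U1 a0 a1 tau Hdx Hdt Hs Htau) as EE. cbv zeta in EE.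
  pose proof (energy_id al be dx dt K e0 e1 a0 a1 tau Hbe Hdx Hdt P0 P1 Pa0 Pa1 Pt EE) as EI.
  rewrite (X_decomp al be dx K e0 e1 a0 a1 Hdx P0 P1 Pa0 Pa1) in EI.
  set (ca := Rabs al/(6*Rabs be)).
  assert (Hca : 0 <= ca).
  { unfold ca. apply Rmult_le_pos; [apply Rabs_pos| apply Rlt_le, Rinv_0_lt_compat].
    pose proof (Rabs_pos_lt be Hbe). lra. }
  set (S := gsum K (fun k => Qf dx e0 e1 k * dx)).
  assert (HS : S = normH1_2 K dx e1 + normH1_2 K dx e0).
  { unfold S, normH1_2, norm2. rewrite <- !gsum_add. apply gsum_ext; intro k. unfold Qf. ring. }
  assert (PQ : periodic_grid K (Qf dx e0 e1)).
  { intro k. unfold Qf, dxp. psolve. }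
  assert (HS3 : gsum K (fun k => Q3 dx e0 e1 k * dx) = 3 * S).
  { unfold Q3. transitivity (gsum K (fun k => Qf dx e0 e1 (k-1)%Z * dx) + gsum K (fun k => Qf dx e0 e1 k * dx)
       + gsum K (fun k => Qf dx e0 e1 (k+1)%Z * dx)).
    { rewrite <- !gsum_add. apply gsum_ext; intro k. ring. }
    rewrite (gsum_shiftm K (fun k => Qf dx e0 e1 k * dx)), (gsum_shift K (fun k => Qf dx e0 e1 k * dx)).
    - fold S. ring.
    - intro k. rewrite PQ. reflexivity.
    - intro k. rewrite PQ. reflexivity. }
  set (X := gsum K (fun k => 6*be*(Tap dx e0 e1 a0 a1 k + Tbp dx e0 e1 a0 a1 k) + Rc1 be dx e0 e1 a0 a1 k + Rc2 al dx e0 e1 a0 a1 k)) in EI.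
  assert (HX : Rabs X <= CX al be cd L R0 B0 B1 B2 Bt * (3*S)).
  { unfold X. eapply Rle_trans; [apply gsum_abs|]. rewrite <- HS3, <- gsum_scal.
    apply gsum_le; intro k. rewrite <- Rmult_assoc.
    apply pw_bound with (dt := dt); auto. }
  assert (HD : - 2 * gsum K (fun k => dxp dx tau k * dxp dx (fun j => (e1 j + e0 j)/2) k * dx)
             <= norm2 K dx (dxp dx tau) + S/2).
  { replace (S/2) with (/2 * S) by field. unfold norm2, S. rewrite <- gsum_scal, <- (gsum_scal K (/2)), <- gsum_add. apply gsum_le; intro k.
    replace (dxp dx (fun j => (e1 j + e0 j)/2) k) with ((dxp dx e1 k + dxp dx e0 k)/2) by (unfold dxp; field; lra).
    unfold Qf. pose proof (pow2_ge_0 (dxp dx tau k + (dxp dx e1 k + dxp dx e0 k)/2)).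
    pose proof (pow2_ge_0 (dxp dx e1 k - dxp dx e0 k)). pose proof (pow2_ge_0 (e1 k)). pose proof (pow2_ge_0 (e0 k)).
    nra. }
  assert (HE : - (al/(3*be)) * gsum K (fun k => tau k * Ef e0 e1 k * dx)
             <= ca * norm2 K dx tau + ca*(9/2)*R0^2 * S).
  { unfold norm2, S. rewrite <- !gsum_scal, <- gsum_add. apply gsum_le; intro k.
    assert (Habs : Rabs (al/(3*be)) = 2*ca).
    { unfold ca. rewrite Rabs_div', Rabs_mult, (Rabs_pos_eq 3) by lra. field.
      pose proof (Rabs_pos_lt be Hbe). lra. }
    pose proof (E_sq_bound (e1 k) (e0 k) R0 (He1 k) (He0 k)) as HEs.
    assert (HQ : e1 k^2 + e0 k^2 <= Qf dx e0 e1 k).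
    { unfold Qf. pose proof (pow2_ge_0 (dxp dx e1 k)). pose proof (pow2_ge_0 (dxp dx e0 k)). lra. }
    assert (H1 : - (al/(3*be)) * (tau k * Ef e0 e1 k) <= ca * (tau k^2 + Ef e0 e1 k^2)).
    { eapply Rle_trans; [apply Rle_abs|]. rewrite Rabs_mult, Rabs_Ropp, Habs, Rabs_mult.
      pose proof (Rabs_pos (tau k)); pose proof (Rabs_pos (Ef e0 e1 k)).
      rewrite <- (sq_abs (tau k)), <- (sq_abs (Ef e0 e1 k)).
      pose proof (pow2_ge_0 (Rabs (tau k) - Rabs (Ef e0 e1 k))). nra. }
    assert (H2 : Ef e0 e1 k ^2 <= 9/2*R0^2*Qf dx e0 e1 k).
    { unfold Ef. eapply Rle_trans; [apply HEs|]. apply Rmult_le_compat_l; [|auto].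
      pose proof (pow2_ge_0 R0); lra. }
    assert (H3 : ca * (tau k^2 + Ef e0 e1 k^2) <= ca * (tau k^2) + ca * (9/2*R0^2*Qf dx e0 e1 k)).
    { rewrite <- Rmult_plus_distr_l. apply Rmult_le_compat_l; auto. lra. }
    pose proof (Rlt_le _ _ Hdx).
    replace (- (al / (3 * be)) * (tau k * Ef e0 e1 k * dx)) with ((- (al/(3*be)) * (tau k * Ef e0 e1 k)) * dx) by ring.
    replace (ca * (tau k ^ 2 * dx) + ca * (9 / 2) * R0 ^ 2 * (Qf dx e0 e1 k * dx)) with
      ((ca * (tau k^2) + ca * (9/2*R0^2*Qf dx e0 e1 k)) * dx) by ring.
    apply Rmult_le_compat_r; [auto|]. lra. }
  assert (HXa : al/(3*be) * X <= 2*ca * (CX al be cd L R0 B0 B1 B2 Bt * (3*S))).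
  { eapply Rle_trans; [apply Rle_abs|]. rewrite Rabs_mult.
    assert (Habs : Rabs (al/(3*be)) = 2*ca).
    { unfold ca. rewrite Rabs_div', Rabs_mult, (Rabs_pos_eq 3) by lra. field.
      pose proof (Rabs_pos_lt be Hbe). lra. }
    rewrite Habs. apply Rmult_le_compat_l; [lra|auto]. }
  unfold Ccore. fold ca. rewrite <- HS.
  lra.
Qed.

Lemma ball_R (x y e : R) : ball x e y <-> Rabs (y - x) < e.
Proof. reflexivity. Qed.

Lemma fold_max_ge (g : R*(R*unit) -> R) l p : In p l -> g p <= fold_right Rmax 0 (map g l).
Proof. induction l; simpl; [tauto|]. intros [->|H]. apply Rmax_l.
  eapply Rle_trans; [apply IHl; auto|apply Rmax_r]. Qed.
Lemma fold_max_pos (g : R*(R*unit) -> R) l : 0 <= fold_right Rmax 0 (map g l).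
Proof. induction l; simpl; [lra|]. eapply Rle_trans; [apply IHl|apply Rmax_r]. Qed.

Lemma bounded2 (f : R -> R -> R) :
  (forall t x, continuous (fun p : R*R => f (fst p) (snd p)) (t,x)) ->
  forall a b c d, exists B, 0 <= B /\ forall t x, a<=t<=b -> c<=x<=d -> Rabs (f t x) <= B.
Proof.
  intros Hc a b c d.
  assert (Hd: forall p : R*R, exists eps : posreal, forall q : R*R, ball p eps q ->
     Rabs (f (fst q) (snd q) - f (fst p) (snd p)) < 1).
  { intros [t x]. specialize (Hc t x). apply (filterlim_locally _ _) with (eps := mkposreal 1 Rlt_0_1) in Hc.
    destruct Hc as [eps Heps]. exists eps. intros q Hq. apply Heps in Hq. exact Hq. }
  set (delta := fun p : Compactness.Tn 2 R => proj1_sig (constructive_indefinite_description _ (Hd (fst p, fst (snd p))))).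
  pose proof (compactness_list 2 (a,(c,tt)) (b,(d,tt)) delta) as HC.
  apply NNPP; intro HnB; apply HC; intros [l Hl]; apply HnB.
  exists (fold_right Rmax 0 (map (fun p : R*(R*unit) => Rabs (f (fst p) (fst (snd p)))) l) + 1).
  split. { pose proof (fold_max_pos (fun p : R*(R*unit) => Rabs (f (fst p) (fst (snd p)))) l). lra. }
  intros t x Ht Hx. destruct (Hl (t,(x,tt))) as [p [Hin [_ Hcl]]]. { simpl; tauto. }
  pose proof (fold_max_ge (fun p : R*(R*unit) => Rabs (f (fst p) (fst (snd p)))) l p Hin) as Hm.
  destruct p as [p1 [p2 []]].
  pose proof (proj2_sig (constructive_indefinite_description _ (Hd (p1,p2)))) as Heps.
  simpl in Heps. specialize (Heps (t,x)). simpl in Heps, Hm.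
  assert (Hb: ball (p1,p2) (proj1_sig (constructive_indefinite_description _ (Hd (p1,p2)))) (t,x)).
  { simpl in Hcl. split; apply ball_R; [exact (proj1 Hcl) | exact (proj1 (proj2 Hcl))]. }
  specialize (Heps Hb).
  pose proof (Rabs_triang_inv (f t x) (f p1 p2)). lra.
Qed.

Lemma per_nat (g : R -> R) L : (forall x, g (x+L) = g x) -> forall n x, g (x + INR n * L) = g x.
Proof. intros H n. induction n; intros x; [rewrite Rmult_0_l, Rplus_0_r; auto|].
  rewrite S_INR. replace (x + (INR n + 1) * L) with ((x + INR n * L) + L) by ring. rewrite H. auto. Qed.

Lemma per_Z (g : R -> R) L : (forall x, g (x+L) = g x) -> forall n x, g (x + IZR n * L) = g x.
Proof. intros H n x. destruct n as [|p|p].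
  - simpl. rewrite Rmult_0_l, Rplus_0_r; auto.
  - rewrite <- positive_nat_Z, <- INR_IZR_INZ. apply per_nat; auto.
  - rewrite <- Pos2Z.opp_pos, opp_IZR, <- positive_nat_Z, <- INR_IZR_INZ.
    rewrite <- (per_nat g L H (Pos.to_nat p) (x + - INR (Pos.to_nat p) * L)). f_equal. ring. Qed.

Lemma per_bound (f : R -> R -> R) L a b B : 0 < L -> (forall t x, f t (x+L) = f t x) ->
  (forall t x, a<=t<=b -> 0<=x<=L -> Rabs (f t x) <= B) -> forall t x, a<=t<=b -> Rabs (f t x) <= B.
Proof.
  intros HL Hp Hb t x Ht.
  destruct (archimed (x/L)) as [H1 H2].
  set (n := (up (x/L) - 1)%Z).
  assert (En : IZR n = IZR (up (x/L)) - 1) by (unfold n; rewrite minus_IZR; reflexivity).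
  assert (E: f t x = f t (x - IZR n * L)) by (rewrite <- (per_Z (f t) L (Hp t) n (x - IZR n * L)); f_equal; ring).
  rewrite E.
  assert (Hxl : x = (x/L) * L) by (field; lra).
  apply Hb; auto. rewrite En. split.
  - rewrite Hxl at 1. nra.
  - rewrite Hxl at 1. nra.
Qed.

Lemma pdx_per (g : R -> R -> R) L : (forall t x, g t (x+L) = g t x) -> forall t x, pdx g t (x+L) = pdx g t x.
Proof. intros H t x. unfold pdx, Derive. f_equal. apply Lim_ext. intro h.
  replace (x + L + h) with ((x + h) + L) by ring. rewrite !H. reflexivity. Qed.

Lemma pdt_per (g : R -> R -> R) L : (forall t x, g t (x+L) = g t x) -> forall t x, pdt g t (x+L) = pdt g t x.
Proof. intros H t x. unfold pdt. apply Derive_ext. intro s. apply H. Qed.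

Lemma mvt_abs (f df : R -> R) a b B : (forall x, is_derive f x (df x)) ->
  (forall x, Rmin a b <= x <= Rmax a b -> Rabs (df x) <= B) -> Rabs (f b - f a) <= B * Rabs (b - a).
Proof.
  intros Hd Hb. destruct (MVT_gen f a b df) as [c [Hc E]].
  - intros x _; auto.
  - intros x _. apply (derivable_continuous_pt f x (exist _ (df x) (proj1 (is_derive_Reals f x (df x)) (Hd x)))).
  - rewrite E, Rabs_mult. apply Rmult_le_compat_r; [apply Rabs_pos|auto].
Qed.

Lemma mvt_ex (f df : R -> R) a b : (forall x, is_derive f x (df x)) ->
  exists c, Rmin a b <= c <= Rmax a b /\ f b - f a = df c * (b - a).
Proof.
  intros Hd. apply (MVT_gen f a b df).
  - intros x _; auto.
  - intros x _. apply (derivable_continuous_pt f x (exist _ (df x) (proj1 (is_derive_Reals f x (df x)) (Hd x)))).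
Qed.

Lemma x_diff (u : R -> R -> R) t B1 dx j :
  (forall y, ex_derive (fun y => u t y) y) -> (forall y, Rabs (pdx u t y) <= B1) -> 0 < dx ->
  Rabs (u t (IZR (j+1) * dx) - u t (IZR j * dx)) <= B1*dx.
Proof.
  intros Hd Hb Hdx.
  eapply Rle_trans; [apply (mvt_abs (fun y => u t y) (pdx u t)) |].
  - intro x. apply Derive_correct. auto.
  - intros x _. auto.
  - rewrite plus_IZR. replace ((IZR j + 1) * dx - IZR j * dx) with dx by ring.
    rewrite Rabs_pos_eq by lra. lra.
Qed.

Lemma x_diff2 (u : R -> R -> R) t B2 dx j :
  (forall y, ex_derive (fun y => u t y) y) -> (forall y, ex_derive (fun y => pdx u t y) y) ->
  (forall y, Rabs (pdx (pdx u) t y) <= B2) -> 0 < dx ->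
  Rabs (u t (IZR (j+1) * dx) - 2 * u t (IZR j * dx) + u t (IZR (j-1) * dx)) <= (2*B2)*(dx*dx).
Proof.
  intros Hd Hd2 Hb Hdx.
  rewrite plus_IZR, minus_IZR.
  destruct (mvt_ex (fun y => u t y) (pdx u t) (IZR j * dx) ((IZR j + 1) * dx)) as [c1 [Hc1 E1]].
  { intro x. apply Derive_correct. auto. }
  destruct (mvt_ex (fun y => u t y) (pdx u t) ((IZR j - 1) * dx) (IZR j * dx)) as [c2 [Hc2 E2]].
  { intro x. apply Derive_correct. auto. }
  rewrite Rmin_left in Hc1, Hc2 by nra. rewrite Rmax_right in Hc1, Hc2 by nra.
  replace (u t ((IZR j + 1) * dx) - 2 * u t (IZR j * dx) + u t ((IZR j - 1) * dx)) with
    ((u t ((IZR j + 1) * dx) - u t (IZR j * dx)) - (u t (IZR j * dx) - u t ((IZR j - 1) * dx))) by ring.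
  rewrite E1, E2.
  replace (pdx u t c1 * ((IZR j + 1) * dx - IZR j * dx) - pdx u t c2 * (IZR j * dx - (IZR j - 1) * dx))
    with (dx * (pdx u t c1 - pdx u t c2)) by ring.
  rewrite Rabs_mult, (Rabs_pos_eq dx) by lra.
  assert (H : Rabs (pdx u t c1 - pdx u t c2) <= B2 * Rabs (c1 - c2)).
  { apply (mvt_abs (fun y => pdx u t y) (pdx (pdx u) t)).
    - intro x. apply Derive_correct. auto.
    - intros x _. auto. }
  assert (Rabs (c1 - c2) <= 2*dx) by (apply Rabs_le; split; nra).
  assert (0 <= B2) by (pose proof (Hb 0); pose proof (Rabs_pos (pdx (pdx u) t 0)); lra).
  assert (B2 * Rabs (c1 - c2) <= B2 * (2*dx)) by (apply Rmult_le_compat_l; lra).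
  replace (2 * B2 * (dx * dx)) with (dx * (B2 * (2*dx))) by ring.
  apply Rmult_le_compat_l; lra.
Qed.

Lemma t_diff (u : R -> R -> R) x t0 t1 Bt :
  (forall s, ex_derive (fun s => u s x) s) -> (forall s, t0 <= s <= t1 -> Rabs (pdt u s x) <= Bt) -> t0 <= t1 ->
  Rabs (u t1 x - u t0 x) <= Bt*(t1 - t0).
Proof.
  intros Hd Hb Ht.
  eapply Rle_trans; [apply (mvt_abs (fun s => u s x) (fun s => pdt u s x)) |].
  - intro s. apply Derive_correct. auto.
  - intros s Hs. rewrite Rmin_left in Hs by lra. rewrite Rmax_right in Hs by lra. auto.
  - rewrite Rabs_pos_eq by lra. lra.
Qed.

Lemma per_grid_nat K (v : Z -> R) : periodic_grid K v -> forall n b, v (b + Z.of_nat K * Z.of_nat n)%Z = v b.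
Proof. intros H n. induction n; intro b. - f_equal. lia.
  - rewrite <- (IHn b). rewrite <- (H (b + Z.of_nat K * Z.of_nat n)%Z). f_equal. lia. Qed.

Lemma per_grid_Z K (v : Z -> R) : periodic_grid K v -> forall n b, v (b + Z.of_nat K * n)%Z = v b.
Proof. intros H n b. destruct (Z_le_gt_dec 0 n).
  - rewrite <- (Z2Nat.id n) by lia. apply per_grid_nat; auto.
  - rewrite <- (per_grid_nat K v H (Z.to_nat (-n)) (b + Z.of_nat K * n)%Z). f_equal. rewrite Z2Nat.id by lia. lia. Qed.

Lemma fold_max_ge' (l : list nat) (g : nat -> R) i : In i l -> g i <= fold_right Rmax 0 (map g l).
Proof. induction l; simpl; [tauto|]. intros [->|H]. apply Rmax_l.
  eapply Rle_trans; [apply IHl; auto|apply Rmax_r]. Qed.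

Lemma norm_inf_ge K (v : Z -> R) : periodic_grid K v -> (1 <= K)%nat -> forall j, Rabs (v j) <= norm_inf K v.
Proof.
  intros H HK j.
  set (rr := ((j - 1) mod Z.of_nat K)%Z).
  assert (Hr : (0 <= rr < Z.of_nat K)%Z) by (apply Z.mod_pos_bound; lia).
  assert (Ej : v j = v (Z.of_nat (Z.to_nat (rr + 1)))).
  { rewrite Z2Nat.id by lia. rewrite <- (per_grid_Z K v H ((j-1) / Z.of_nat K) (rr+1)).
    f_equal. unfold rr. pose proof (Z.div_mod (j-1) (Z.of_nat K)). lia. }
  rewrite Ej. unfold norm_inf.
  apply (fold_max_ge' _ (fun i => Rabs (v (Z.of_nat i)))). apply in_seq. lia.
Qed.

Lemma deriv_bound (f : R -> R -> R) L T :
  0 < L -> (forall t x, f t (x + L) = f t x) ->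
  (forall t x, continuous (fun p : R*R => f (fst p) (snd p)) (t,x)) ->
  exists B, 0 <= B /\ forall t x, 0 <= t <= T -> Rabs (f t x) <= B.
Proof.
  intros HL Hp Hc. destruct (bounded2 f Hc 0 T 0 L) as [B [HB H]].
  exists B. split; auto. intros t x Ht. apply (per_bound f L 0 T B HL Hp); auto.
Qed.

Theorem lemma3p5 :
  forall (alpha beta L T q r : R) (u : R -> R -> R),
    beta <> 0 -> 0 < L -> 0 < T -> 1 < q ->
    smooth2 u ->
    (forall t x, u t (x + L) = u t x) ->
    (forall t x, 0 <= t <= T ->
       pdt u t x = - alpha * u t x * pdx u t x + beta * pdx (pdx (pdx u)) t x) ->
    (exists s, s < r /\ forall t x, 0 <= t <= T -> Rabs (u t x) <= s) ->
    exists C2 : R, 0 < C2 /\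
    forall (c0 : R) (K M M0 : nat) (U : nat -> gridfun),
      0 < c0 -> (1 <= K)%nat -> (M0 < M)%nat ->
      let dx := L / INR K in
      let dt := T / INR M in
      let ut : nat -> gridfun := fun m k => u (INR m * dt) (IZR k * dx) in
      let e : nat -> gridfun := fun m k => U m k - ut m k in
      let tau := trunc_err alpha beta dx dt ut in
      (forall m, periodic_grid K (U m)) ->
      (forall k, U 0%nat k = u 0 (IZR k * dx)) ->
      (forall n, (n <= M0)%nat -> scheme_step alpha beta dx dt (U n) (U (S n))) ->
      (forall m, (m <= M0)%nat -> norm_inf K (U m) <= r) ->
      dt < Rmin (scheme_eps1 alpha beta q r dx) (scheme_eps2 alpha beta q r dx) ->
      norm_inf K (U (S M0)) <= q * r ->
      (forall m, (m <= M0)%nat ->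
         gnorm K dx (tau m) <= c0 * (dt ^ 2 + dx ^ 2) /\
         gnorm K dx (dxp dx (tau m)) <= c0 * (dt ^ 2 + dx ^ 2)) ->
      dt <= dx ->
      forall m, (m <= M0)%nat ->
        let A := fun n => alpha / (3 * beta) * gsum K (fun k => (e n k) ^ 3 * dx) in
        (norm2 K dx (dxp dx (e (S m))) - norm2 K dx (dxp dx (e m))) / dt
        <= - ((A (S m) - A m) / dt)
           + C2 * ((normH1_2 K dx (e (S m)) + normH1_2 K dx (e m)) / 2)
           + (Rabs alpha / (6 * Rabs beta) + 1) * c0 ^ 2 * (dt ^ 2 + dx ^ 2) ^ 2.
Proof.
  intros alpha beta L T q r u Hbe HL HT Hq Hsm Hper Hpde [s [Hsr Hs]].
  assert (Hr : 0 < r). { pose proof (Hs 0 0 ltac:(lra)). pose proof (Rabs_pos (u 0 0)). lra. }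
  assert (Hbp : 0 < Rabs beta) by (apply Rabs_pos_lt; auto).
  assert (Pux : forall t x, pdx u t (x + L) = pdx u t x) by (apply pdx_per; auto).
  assert (Puxx : forall t x, pdx (pdx u) t (x + L) = pdx (pdx u) t x) by (apply pdx_per; auto).
  assert (Put : forall t x, pdt u t (x + L) = pdt u t x) by (apply pdt_per; auto).
  destruct (deriv_bound (pdx u) L T HL Pux (proj2 (proj2 (Hsm (false :: nil))))) as [B1 [HB1p HB1]].
  destruct (deriv_bound (pdx (pdx u)) L T HL Puxx (proj2 (proj2 (Hsm (false :: false :: nil))))) as [B2 [HB2p HB2]].
  destruct (deriv_bound (pdt u) L T HL Put (proj2 (proj2 (Hsm (true :: nil))))) as [Bt [HBtp HBt]].
  set (cd := 2/(3*Rabs beta)).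
  assert (Hcd : 0 <= cd) by (unfold cd; pos).
  exists (Ccore alpha beta cd L (q*r + r) r B1 (2*B2) Bt).
  split.
  { unfold Ccore, CX. assert (0 <= Rabs alpha / (6 * Rabs beta) * (9 / 2) * (q * r + r) ^ 2
        + 6 * (Rabs alpha / (6 * Rabs beta)) * (6 * Rabs beta * (B1 / 2 + (B1 + 2 * B2)) + 2 * (Rabs beta * cd * L) * Bt +
      Rabs alpha / 6 * ((3 * (q * r + r) + 6 * r) * (6 * (r + B1))))).
    { apply Rplus_le_le_0_compat; [apply Rmult_le_pos; [pos| apply pow2_ge_0]|]. pos. }
    lra. }
  intros c0 K M M0 U Hc0 HK HM0 dx dt ut e tau HUper HU0 Hsch Hbnd Hdt0 HUM0 Htau Hdtdx m Hm A.
  assert (HKp : 1 <= INR K) by (apply (le_INR 1); lia).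
  assert (HMp : 1 <= INR M) by (apply (le_INR 1); lia).
  assert (Hdx : 0 < dx) by (unfold dx; apply Rdiv_lt_0_compat; lra).
  assert (Hdt : 0 < dt) by (unfold dt; apply Rdiv_lt_0_compat; lra).
  assert (HdL : dx <= L).
  { unfold dx. apply (Rmult_le_reg_r (INR K)); [lra|]. field_simplify; nra. }
  assert (Htime : forall n, (n <= M)%nat -> 0 <= INR n * dt <= T).
  { intros n Hn. pose proof (le_INR _ _ Hn). pose proof (pos_INR n). unfold dt. split.
    - apply Rmult_le_pos; [lra| apply Rlt_le, Rdiv_lt_0_compat; lra].
    - replace (INR n * (T / INR M)) with (T * (INR n / INR M)) by (field; lra).
      rewrite <- (Rmult_1_r T) at 2. apply Rmult_le_compat_l; [lra|].
      apply (Rmult_le_reg_r (INR M)); [lra|]. field_simplify; lra. }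
  assert (Hcd3 : dt <= cd * (dx * (dx * dx))).
  { assert (H2 : dt < scheme_eps2 alpha beta q r dx) by (eapply Rlt_le_trans; [apply Hdt0|apply Rmin_r]).
    unfold scheme_eps2 in H2.
    set (D := Rabs alpha / 6 * dx ^ 2 * (2 * q + 1) * r + 3 / 2 * Rabs beta) in H2.
    assert (HD : 3/2 * Rabs beta <= D).
    { unfold D. assert (0 <= Rabs alpha / 6 * dx ^ 2 * (2 * q + 1) * r) by (repeat apply Rmult_le_pos; try pos; try apply pow2_ge_0; lra). lra. }
    assert (dx ^ 3 / D <= dx^3 / (3/2 * Rabs beta)).
    { apply Rmult_le_compat_l; [pose proof (pow_lt dx 3 Hdx); lra|]. apply Rinv_le_contravar; lra. }
    unfold cd. replace (2 / (3 * Rabs beta) * (dx * (dx * dx))) with (dx ^ 3 / (3 / 2 * Rabs beta)) by (field; lra).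
    lra. }
  assert (Pu : forall n, periodic_grid K (ut n)).
  { intros n k. unfold ut. rewrite plus_IZR, <- INR_IZR_INZ.
    replace ((IZR k + INR K) * dx) with (IZR k * dx + L) by (unfold dx; field; lra). apply Hper. }
  assert (Hub : forall n, (n <= M)%nat -> forall j, Rabs (ut n j) <= r).
  { intros n Hn j. unfold ut. pose proof (Hs (INR n * dt) (IZR j * dx) (Htime n Hn)). lra. }
  assert (Hud : forall n, (n <= M)%nat -> forall j, Rabs (ut n (j+1)%Z - ut n j) <= B1*dx).
  { intros n Hn j. unfold ut. apply x_diff; [| |exact Hdx].
    - intro y. exact (proj1 (proj2 (Hsm nil)) (INR n * dt) y).
    - intro y. apply HB1. apply Htime; auto. }
  assert (Hud2 : forall n, (n <= M)%nat -> forall j, Rabs (ut n (j+1)%Z - 2 * ut n j + ut n (j-1)%Z) <= (2*B2)*(dx*dx)).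
  { intros n Hn j. unfold ut. apply x_diff2; [| | |exact Hdx].
    - intro y. exact (proj1 (proj2 (Hsm nil)) (INR n * dt) y).
    - intro y. exact (proj1 (proj2 (Hsm (false :: nil))) (INR n * dt) y).
    - intro y. apply HB2. apply Htime; auto. }
  assert (HmM : (S m <= M)%nat) by lia.
  assert (Hut : forall j, Rabs (ut (S m) j - ut m j) <= Bt*dt).
  { intro j. unfold ut. replace dt with (INR (S m) * dt - INR m * dt) at 3 by (rewrite S_INR; ring).
    apply t_diff.
    - intro t. exact (proj1 (Hsm nil) t (IZR j * dx)).
    - intros t Ht. apply HBt. pose proof (Htime m ltac:(lia)). pose proof (Htime (S m) HmM). lra.
    - rewrite S_INR. lra. }
  assert (HUb : forall n, (n <= S M0)%nat -> forall j, Rabs (U n j) <= q * r).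
  { intros n Hn j. eapply Rle_trans; [apply norm_inf_ge; auto|].
    destruct (Nat.eq_dec n (S M0)) as [->|Hne]; auto.
    eapply Rle_trans; [apply Hbnd; lia|]. nra. }
  assert (He : forall n, (n <= S M0)%nat -> forall j, Rabs (U n j - ut n j) <= q*r + r).
  { intros n Hn j. eapply Rle_trans; [apply Rabs_triang|]. rewrite Rabs_Ropp.
    pose proof (HUb n Hn j). pose proof (Hub n ltac:(lia) j). lra. }
  pose proof (core alpha beta cd L (q*r+r) r B1 (2*B2) Bt K dx dt (U m) (U (S m)) (ut m) (ut (S m)) (tau m)
    Hbe Hdx Hdt HdL Hcd3 Hcd (HUper m) (HUper (S m)) (Pu m) (Pu (S m)) (Hsch m Hm)
    (fun k => eq_refl) (He m ltac:(lia)) (He (S m) ltac:(lia)) (Hub m ltac:(lia)) (Hub (S m) HmM)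
    (Hud m ltac:(lia)) (Hud (S m) HmM) (Hud2 m ltac:(lia)) (Hud2 (S m) HmM) Hut) as HC.
  cbv beta zeta in HC.
  unfold A, e. cbv beta.
  destruct (Htau m Hm) as [Ht1 Ht2].
  assert (Hsq : forall x y, 0 <= x -> sqrt x <= y -> x <= y^2).
  { intros x y Hx Hxy. pose proof (sqrt_pos x). rewrite <- (sqrt_sqrt x Hx).
    replace (y^2) with (y*y) by ring. apply Rmult_le_compat; lra. }
  assert (Hn1 : norm2 K dx (tau m) <= (c0 * (dt ^ 2 + dx ^ 2))^2).
  { apply Hsq; auto. unfold norm2. apply gsum_nonneg; intro k. pose proof (pow2_ge_0 (tau m k)). nra. }
  assert (Hn2 : norm2 K dx (dxp dx (tau m)) <= (c0 * (dt ^ 2 + dx ^ 2))^2).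
  { apply Hsq; auto. unfold norm2. apply gsum_nonneg; intro k. pose proof (pow2_ge_0 (dxp dx (tau m) k)). nra. }
  assert (Hca : 0 <= Rabs alpha / (6 * Rabs beta)) by pos.
  assert (Hfin : Rabs alpha / (6 * Rabs beta) * norm2 K dx (tau m) + norm2 K dx (dxp dx (tau m))
     <= (Rabs alpha / (6 * Rabs beta) + 1) * c0 ^ 2 * (dt ^ 2 + dx ^ 2) ^ 2).
  { replace ((Rabs alpha / (6 * Rabs beta) + 1) * c0 ^ 2 * (dt ^ 2 + dx ^ 2) ^ 2) with
      (Rabs alpha / (6 * Rabs beta) * (c0 * (dt ^ 2 + dx ^ 2))^2 + (c0 * (dt ^ 2 + dx ^ 2))^2) by ring.
    apply Rplus_le_compat; auto. apply Rmult_le_compat_l; auto. }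
  lra.
Qed.
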